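(* Let $n_0,n_1\ge 1$ and $r\ge 2$ be integers such that $\left(\frac{1}{n_0}\right)^{\frac{1}{r-1}}+\left(\frac{1}{n_1}\right)^{\frac{1}{r-1}}\ge 1$. Let $$p=\frac{\left(\frac{1}{n_0}\right)^{\frac{1}{r-1}}}{\left(\frac{1}{n_0}\right)^{\frac{1}{r-1}}+\left(\frac{1}{n_1}\right)^{\frac{1}{r-1}}}.$$ Then $n_0p^r+n_1(1-p)^r\le 1$. *)

(* Defs.v *)
From Stdlib Require Import Reals.
Open Scope R_scope.

Definition root_inv (n r : nat) : R := Rpower (/ INR n) (/ (INR r - 1)).

(* Main.v *)
Require Import Defs.
From Stdlib Require Import Reals Lra Lia.
Open Scope R_scope.

Lemma root_pow (n m : nat) : (1 <= n)%nat -> (1 <= m)%nat ->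
  root_inv n (S m) ^ m = / INR n /\ 0 < root_inv n (S m).
Proof.
  intros Hn Hm.
  assert (Hn' : 0 < INR n) by (apply lt_0_INR; lia).
  assert (Hm' : 0 < INR m) by (apply lt_0_INR; lia).
  unfold root_inv. split; [|apply exp_pos].
  rewrite <- Rpower_pow by apply exp_pos.
  rewrite Rpower_mult.
  replace (/ (INR (S m) - 1) * INR m) with 1.
  - apply Rpower_1. apply Rinv_0_lt_compat; lra.
  - rewrite S_INR. field. lra.
Qed.

Theorem lemma2p2 (n0 n1 r : nat) :
  (1 <= n0)%nat -> (1 <= n1)%nat -> (2 <= r)%nat ->
  root_inv n0 r + root_inv n1 r >= 1 ->
  let p := root_inv n0 r / (root_inv n0 r + root_inv n1 r) in
  INR n0 * p ^ r + INR n1 * (1 - p) ^ r <= 1.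
Proof.
  intros H0 H1 Hr Hs p.
  destruct r as [|m]; [lia|].
  assert (Hm : (1 <= m)%nat) by lia.
  destruct (root_pow n0 m H0 Hm) as [Ha Ha0].
  destruct (root_pow n1 m H1 Hm) as [Hb Hb0].
  unfold p. clear p.
  set (a := root_inv n0 (S m)) in *.
  set (b := root_inv n1 (S m)) in *.
  assert (Hn0 : 0 < INR n0) by (apply lt_0_INR; lia).
  assert (Hn1 : 0 < INR n1) by (apply lt_0_INR; lia).
  assert (HA : INR n0 * a ^ m = 1) by (rewrite Ha; field; lra).
  assert (HB : INR n1 * b ^ m = 1) by (rewrite Hb; field; lra).
  assert (Hsm : 1 <= (a + b) ^ m) by (apply pow_R1_Rle; lra).
  replace (1 - a / (a + b)) with (b / (a + b)) by (field; lra).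
  unfold Rdiv. rewrite !Rpow_mult_distr. simpl.
  rewrite Ha, Hb, pow_inv.
  replace (INR n0 * (a * / INR n0 * (/ (a + b) * / (a + b) ^ m)) +
     INR n1 * (b * / INR n1 * (/ (a + b) * / (a + b) ^ m)))
    with (/ (a + b) ^ m) by (field; repeat split; lra).
  rewrite <- Rinv_1. apply Rinv_le_contravar; lra.
Qed.
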